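(* Let $\mathcal{M}_{\mathbb{P}}=(\mathcal{M},\mathbb{P})$ be an uncertain parametric MDP, $\varphi$ a specification with a fixed threshold $\lambda$, and $\mathcal{U}_N$ a set of $N\ge1$ parameter instantiations sampled independently from $\mathbb{P}$. Let $N_{\neg\varphi}=|\{u\in\mathcal{U}_N:\mathcal{M}[u]\not\models\varphi\}|$ be the number of violating samples. Choose a confidence probability $\beta\in(0,1)$. Define $t^*(N)=0$, and for $k=0,\dots,N-1$ let $t^*(k)$ be the solution $t$ of \[\frac{1-\beta}{N}=\sum_{i=0}^{k}\binom{N}{i}(1-t)^i t^{N-i}.\] Then \[\mathbb{P}^N\Big\{F(\mathcal{M}_{\mathbb{P}},\varphi)\ \ge\ t^*(N_{\neg\varphi})\Big\}\ \ge\ \beta .\]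
   Context: A parametric MDP (pMDP) is $\mathcal{M}=(S,\mathit{Act},s_I,V,\mathcal{P})$ with finite state set $S$, finite action set $\mathit{Act}$, initial state $s_I$, finite parameter set $V$, and transition function $\mathcal{P}:S\times\mathit{Act}\times S\to\mathbb{Q}[V]$. The parameter space $\mathcal{V}_{\mathcal{M}}$ consists of instantiations $u:V\to\mathbb{R}$; $\mathcal{M}[u]$ is the MDP obtained by evaluating the polynomials at $u$, assumed well-defined and graph-preserving (nonzero transitions get values in $(0,1]$). An uncertain pMDP is $\mathcal{M}_{\mathbb{P}}=(\mathcal{M},\mathbb{P})$ with $\mathbb{P}$ a (possibly unknown) probability distribution over $\mathcal{V}_{\mathcal{M}}$. A specification $\varphi$ consists of a measure on MDPs (e.g. maximal/minimal reachability probability, expected reward), a comparison operator in $\{<,\le,\ge,>\}$ and a threshold $\lambda$; $\mathcal{M}[u]\models\varphi$ means the measure's value on $\mathcal{M}[u]$ compares to $\lambda$ as prescribed. The satisfaction probability is $F(\mathcal{M}_{\mathbb{P}},\varphi)=\int_{\mathcal{V}_{\mathcal{M}}}I_\varphi(u)\,d\mathbb{P}(u)$ with $I_\varphi(u)=1$ iff $\mathcal{M}[u]\models\varphi$, else $0$ (assumed measurable). $\mathbb{P}^N$ is the $N$-fold product measure governing $\mathcal{U}_N$. *)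

(* Defs.v *)
From HB Require Import structures.
From mathcomp Require Import all_boot all_order all_algebra.
From mathcomp Require Import all_classical all_reals all_analysis.
From mathcomp Require mpoly.
Import -(notations) mpoly.

Set Implicit Arguments.
Unset Strict Implicit.
Unset Printing Implicit Defensive.
Import Order.TTheory GRing.Theory Num.Theory.
Local Open Scope classical_set_scope.
Local Open Scope ring_scope.

(* Parametric MDPs.  The parameter set V is 'I_nV (nV parameters);    *)
(* transitions are polynomials in Q[V] = {mpoly rat[nV]}.             *)
Record pMDP (nV : nat) := PMDP {
  pS : finType;
  pAct : finType;
  p_init : pS;
  pP : pS -> pAct -> pS -> mpoly.mpoly nV rat
}.
Arguments pP {nV} p _ _ _.
Arguments p_init {nV} p.

Record MDP (R : realType) (S Act : finType) := MkMDP {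
  m_init : S;
  m_P : S -> Act -> S -> R
}.

(* Instantiations u : V -> R, represented as nV.-tuples of reals, so that
   the parameter space carries the (product) Borel sigma-algebra of the library. *)
Definition param_space (R : realType) (nV : nat) := (nV.-tuple R)%type.

Definition peval (R : realType) (nV : nat) (p : mpoly.mpoly nV rat)
  (u : param_space R nV) : R :=
  mpoly.mmap (fun q : rat => ratr q) (fun i => tnth u i) p.

Definition instantiate (R : realType) (nV : nat) (M : pMDP nV)
  (u : param_space R nV) : MDP R (pS M) (pAct M) :=
  MkMDP (p_init M) (fun s a s' => peval (pP M s a s') u).

(* M[u] is well-defined: for each state and action, the action is either
   not enabled (all its transition polynomials are 0) or the evaluated
   transitions form a probability distribution;
   graph-preserving: nonzero transitions get values in (0,1]. *)
Definition well_defined_graph_preserving (R : realType) (nV : nat)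
  (M : pMDP nV) (u : param_space R nV) : Prop :=
  (forall s a, (forall s', pP M s a s' = 0) \/
               \sum_(s' : pS M) peval (pP M s a s') u = 1) /\
  (forall s a s', pP M s a s' != 0 ->
     0 < peval (pP M s a s') u <= 1).

(* Specifications: a measure on MDPs (e.g. max/min reachability probability,
   expected reward; extended-real valued), a comparison operator and a
   threshold lambda. *)
Inductive cmp_op := CLt | CLe | CGe | CGt.

Record spec (R : realType) (S Act : finType) := Spec {
  sp_measure : MDP R S Act -> \bar R;
  sp_cmp : cmp_op;
  sp_threshold : R
}.

Definition cmp_eval (R : realType) (c : cmp_op) (x : \bar R) (l : R) : bool :=
  match c with
  | CLt => (x < l%:E)%E
  | CLe => (x <= l%:E)%E
  | CGe => (l%:E <= x)%E
  | CGt => (l%:E < x)%E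
  end.

Definition models (R : realType) (S Act : finType) (M : MDP R S Act)
  (phi : spec R S Act) : bool :=
  cmp_eval (sp_cmp phi) (sp_measure phi M) (sp_threshold phi).

Definition I_phi (R : realType) (nV : nat) (M : pMDP nV)
  (phi : spec R (pS M) (pAct M)) (u : param_space R nV) : R :=
  (models (instantiate M u) phi)%:R.

Definition sat_prob (R : realType) (nV : nat) (M : pMDP nV)
  (phi : spec R (pS M) (pAct M))
  (P : probability (param_space R nV) R) : \bar R :=
  (\int[P]_u (I_phi phi u)%:E)%E.

(* N samples U_0..U_{N-1} : Omega -> parameter space, drawn independently
   from P: each U_i is measurable and their joint law is the N-fold product
   P^N, i.e. Q(\bigcap_i U_i^{-1}(A_i)) = \prod_i P(A_i) for all measurable
   A_i (this also gives that each U_i has law P). *)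
Definition iid_sample (R : realType) (nV N : nat) (dO : measure_display)
  (Omega : measurableType dO) (Q : probability Omega R)
  (P : probability (param_space R nV) R)
  (U : 'I_N -> Omega -> param_space R nV) : Prop :=
  (forall i, measurable_fun setT (U i)) /\
  (forall A : 'I_N -> set (param_space R nV),
     (forall i, measurable (A i)) ->
     Q (\bigcap_(i in [set: 'I_N]) (U i @^-1` A i)) = (\prod_(i < N) P (A i))%E).

Definition num_violating (R : realType) (nV N : nat) (M : pMDP nV)
  (phi : spec R (pS M) (pAct M)) (Omega : Type)
  (U : 'I_N -> Omega -> param_space R nV) (w : Omega) : nat :=
  #|[set i : 'I_N | ~~ models (instantiate M (U i w)) phi]|.

Definition binom_tail (R : realType) (N k : nat) (t : R) : R :=
  \sum_(i < k.+1) ('C(N, i))%:R * (1 - t) ^+ i * t ^+ (N - i).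

Definition is_tstar (R : realType) (N : nat) (beta : R) (tstar : nat -> R) : Prop :=
  tstar N = 0 /\
  forall k, (k < N)%N ->
    0 <= tstar k <= 1 /\ (1 - beta) / N%:R = binom_tail N k (tstar k).

(* Main.v *)
Set Warnings "-all".
Require Import Defs.
From HB Require Import structures.
From mathcomp Require Import all_boot all_order all_algebra.
From mathcomp Require Import all_classical all_reals all_analysis.
From mathcomp Require mpoly.
From mathcomp Require Import lra ring zify.
Import Order.TTheory GRing.Theory Num.Theory.
Local Open Scope classical_set_scope.
Local Open Scope ring_scope.
Section BT.
Variable R : realType.

Lemma bt0 (k : nat) (t : R) : binom_tail 0 k t = 1.
Proof.
rewrite /binom_tail big_ord_recl /= bin0 subnn !expr0 !mulr1 big1 ?addr0 // => i _.
by rewrite /bump /= add1n bin0n /= !mul0r.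
Qed.

Lemma bt_rec0 (N : nat) (t : R) : binom_tail N.+1 0 t = t * binom_tail N 0 t.
Proof.
rewrite /binom_tail !big_ord_recl !big_ord0 /= !addr0 !bin0 !subn0 !expr0 !mul1r.
by rewrite exprS.
Qed.

Lemma bt_recS (N k : nat) (t : R) :
  binom_tail N.+1 k.+1 t = t * binom_tail N k.+1 t + (1 - t) * binom_tail N k t.
Proof.
rewrite /binom_tail big_ord_recl [in X in _ = t * X + _]big_ord_recl /=.
rewrite mulrDr -addrA; congr (_ + _).
  by rewrite !bin0 !subn0 !expr0 exprS; ring.
rewrite (eq_bigr (fun i : 'I_k.+1 => ('C(N, i.+1))%:R * (1 - t) ^+ i.+1 * t ^+ (N - i)
  + ('C(N, i))%:R * (1 - t) ^+ i.+1 * t ^+ (N - i))); last first.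
  by move=> i _; rewrite /bump /= add1n binS natrD !mulrDl subSS.
rewrite big_split /= !mulr_sumr; congr (_ + _); apply: eq_bigr => i _.
  rewrite /bump /= add1n.
  case: (ltnP i N) => hi.
    by rewrite -(subnSK hi) [t ^+ (_.+1)]exprS; ring.
  by rewrite bin_small ?ltnS // mulr0n !mul0r mulr0.
by rewrite exprS; ring.
Qed.

Lemma bt_ge0 (N k : nat) (t : R) : 0 <= t <= 1 -> 0 <= binom_tail N k t.
Proof.
move=> /andP[t0 t1]; rewrite /binom_tail; apply: sumr_ge0 => i _.
by rewrite !mulr_ge0 ?exprn_ge0 ?ler0n ?subr_ge0.
Qed.

Lemma bt_mon_k (N k : nat) (t : R) : 0 <= t <= 1 -> binom_tail N k t <= binom_tail N k.+1 t.
Proof.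
move=> /andP[t0 t1]; rewrite /binom_tail [X in _ <= X]big_ord_recr /= lerDl.
by rewrite !mulr_ge0 ?exprn_ge0 ?ler0n ?subr_ge0.
Qed.

Lemma bt_mon (N : nat) : forall k (s t : R), 0 <= s -> s <= t -> t <= 1 ->
  binom_tail N k s <= binom_tail N k t.
Proof.
elim: N => [|N IH] k s t s0 st t1.
  by rewrite !bt0.
have s1 : s <= 1 by apply: le_trans t1.
have t0 : 0 <= t by apply: le_trans st.
case: k => [|k].
  rewrite !bt_rec0.
  have h1 := IH 0%N s t s0 st t1.
  have h2 : 0 <= binom_tail N 0 s by apply: bt_ge0; rewrite s0 s1.
  nra.
rewrite !bt_recS.
have hA := IH k.+1 s t s0 st t1.
have hB := IH k s t s0 st t1.
have hAB : binom_tail N k s <= binom_tail N k.+1 s by apply: bt_mon_k; rewrite s0 s1.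
have h2 : 0 <= binom_tail N k s by apply: bt_ge0; rewrite s0 s1.
nra.
Qed.
End BT.

Lemma sum_card (R : realType) (N : nat) (F : nat -> R) :
  \sum_(S : {set 'I_N}) F #|S| = \sum_(k < N.+1) ('C(N, k))%:R * F k.
Proof.
rewrite (partition_big (fun S : {set 'I_N} => (inord #|S| : 'I_N.+1)) predT) //=.
apply: eq_bigr => k _.
rewrite (eq_bigr (fun _ => F k)); last first.
  move=> S /eqP <-; rewrite inordK // ltnS.
  by rewrite -[X in (_ <= X)%N](card_ord N) max_card.
rewrite sumr_const [RHS]mulrC mulr_natr; congr (_ *+ _).
have := card_draws 'I_N k; rewrite card_ord => <-; rewrite cardsE.
apply: eq_card => S; rewrite !unfold_in /=.
rewrite inordK // ltnS.
by rewrite -[X in (_ <= X)%N](card_ord N) max_card.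
Qed.

Theorem theorem2 (R : realType) (nV : nat) (M : pMDP nV)
  (P : probability (param_space R nV) R)
  (phi : spec R (pS M) (pAct M))
  (N : nat) (dO : measure_display) (Omega : measurableType dO)
  (Q : probability Omega R) (U : 'I_N -> Omega -> param_space R nV)
  (beta : R) (tstar : nat -> R) :
  P [set u | well_defined_graph_preserving M u] = 1%E ->
  measurable [set u : param_space R nV | models (instantiate M u) phi] ->
  (1 <= N)%N ->
  iid_sample Q P U ->
  0 < beta < 1 ->
  is_tstar N beta tstar ->
  (beta%:E <= Q [set w | ((tstar (num_violating phi U w))%:E <= sat_prob phi P)%E])%E.
Proof.
move=> _ mG N1 [mU iid] /andP[b0 b1] [tN tk].
set G := [set u : param_space R nV | models (instantiate M u) phi].
pose p := fine (P G).
have PG : P G = p%:E by rewrite /p fineK // fin_num_measure.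
have PB : P (~` G) = (1 - p)%:E by rewrite probability_setC // PG EFinB.
have p01 : 0 <= p <= 1.
  by rewrite -!lee_fin -PG measure_ge0 probability_le1.
have satE : sat_prob phi P = p%:E.
  rewrite /sat_prob -PG -[in RHS](setIT G) -integral_indic //.
  apply: eq_integral => u _; rewrite indicE /I_phi.
  case h: (u \in G).
    by have := set_mem h; rewrite /G /= => ->.
  have -> // : models (instantiate M u) phi = false.
  by apply/negbTE/negP => hm; move: h; rewrite mem_set.
pose viol (w : Omega) : {set 'I_N} := [set i | ~~ models (instantiate M (U i w)) phi]%SET.
pose A (S : {set 'I_N}) (i : 'I_N) := if i \in S then ~` G else G.
pose E (S : {set 'I_N}) := [set w | viol w = S].
have mA S i : measurable (A S i).
  by rewrite /A; case: (i \in S) => //; exact: measurableC.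
have EE S : E S = \bigcap_(i in [set: 'I_N]) (U i @^-1` A S i).
  apply/seteqP; split => [w /= <- i _|w /= h].
    rewrite /A inE; case: (boolP (models (instantiate M (U i w)) phi)) => hm /=.
      exact: hm.
    by move=> hm'; rewrite hm' in hm.
  apply/setP => i; rewrite inE; have := h i I; rewrite /A; case: (i \in S) => /= hA.
    by apply/negP => hm; apply: hA.
  by apply/negbF; exact: hA.
have mE S : measurable (E S).
  rewrite EE; apply: fin_bigcap_measurable; first exact: finite_finset.
  move=> i _; rewrite -[X in measurable X]setTI; exact: (mU i).
have QE S : Q (E S) = ((1 - p) ^+ #|S| * p ^+ (N - #|S|))%:E.
  rewrite EE iid //.
  rewrite (eq_bigr (fun i => (if i \in S then 1 - p else p)%:E)); last first.
    by move=> i _; rewrite /A; case: (i \in S).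
  rewrite prodEFin; congr EFin.
  rewrite (bigID (mem S)) /=.
  rewrite (eq_bigr (fun=> 1 - p)); last by move=> i ->.
  rewrite [X in _ * X](eq_bigr (fun=> p)); last by move=> i /negbTE ->.
  rewrite !prodr_const; congr (_ * _ ^+ _).
  have hc : (#|mem S| + #|[predC S]|)%N = N by rewrite cardC card_ord.
  have hb : #|(fun i : 'I_N => i \notin S)| = #|[predC S]| by apply: eq_card.
  rewrite hb; move: hc; move: #|[predC S]| #|mem S| => a b; lia.
pose Bad := [set w | p < tstar #|viol w|].
have BadE : Bad = \bigcup_(S in [set S : {set 'I_N} | p < tstar #|S|]) E S.
  apply/seteqP; split => [w /= hw|w [S /= hS hE]]; last by rewrite /Bad /= hE.
  by exists (viol w).
have QBad : Q Bad = (\sum_(S : {set 'I_N}) if p < tstar #|S| then (1 - p) ^+ #|S| * p ^+ (N - #|S|) else 0)%:E.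
  rewrite BadE measure_fin_bigcup; first last.
  - by move=> S _; exact: mE.
  - by move=> S S' _ _ [w [/= h1 h2]]; rewrite -h1 -h2.
  - exact: finite_finset.
  rewrite (@eq_fsbigr _ _ _ _ _ (fun S : {set 'I_N} => ((1 - p) ^+ #|S| * p ^+ (N - #|S|))%:E)); last first.
    by move=> S _; exact: QE.
  etransitivity; first exact: (fsumEFin (fun S : {set 'I_N} => (1 - p) ^+ #|S| * p ^+ (N - #|S|)) finite_finset).
  congr EFin.
  rewrite (fsbigE (enum [pred S : {set 'I_N} | p < tstar #|S|])); last 3 first.
  - exact: enum_uniq.
  - by move=> S /=; rewrite mem_enum.
  - by move=> S /= hS; rewrite mem_enum unfold_in /= hS.
  rewrite big_enum_cond /= big_mkcond /=; apply: eq_bigr => S _.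
  have -> : (S \in [set S0 : {set 'I_N} | p < tstar #|S0|]) = (p < tstar #|S|).
    by apply/idP/idP => [/set_mem|/mem_set].
  by rewrite inE andbb.
have Bnd : \sum_(S : {set 'I_N}) (if p < tstar #|S| then (1 - p) ^+ #|S| * p ^+ (N - #|S|) else 0) <= 1 - beta.
  have := sum_card R N (fun k => if p < tstar k then (1 - p) ^+ k * p ^+ (N - k) else 0).
  move=> /= ->.
  rewrite big_ord_recr /= tN.
  have -> : (p < 0) = false by apply/negbTE; rewrite -leNgt; case/andP: p01.
  rewrite mulr0 addr0.
  have hN : (N%:R : R) != 0 by rewrite pnatr_eq0 -lt0n.
  have -> : 1 - beta = \sum_(k < N) ((1 - beta) / N%:R).
    by rewrite sumr_const card_ord -[_ *+ N]mulr_natr divfK.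
  apply: ler_sum => k _.
  have [/andP[t0 t1] teq] := tk k (ltn_ord k).
  case: ifP => hk; last first.
    by rewrite mulr0 divr_ge0 ?ler0n // subr_ge0 ltW.
  rewrite teq; case/andP: p01 => p0 p1.
  apply: le_trans (@bt_mon R N k p (tstar k) p0 (ltW hk) t1).
  rewrite /binom_tail big_ord_recr /= mulrA lerDr.
  apply: sumr_ge0 => i _.
  by rewrite !mulr_ge0 ?exprn_ge0 ?ler0n ?subr_ge0.
have -> : [set w | ((tstar (num_violating phi U w))%:E <= sat_prob phi P)%E] = ~` Bad.
  have nvE w : num_violating phi U w = #|viol w|.
    apply: eq_card => i; rewrite /viol inE.
    by apply/idP/idP => [/set_mem|/mem_set].
  apply/seteqP; split => w /=; rewrite satE lee_fin nvE leNgt.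
    move=> h hb; move/negP: h; apply; exact: hb.
  move=> h; apply/negP => hb; apply: h; exact: hb.
have mBad : measurable Bad.
  rewrite BadE; apply: fin_bigcup_measurable; first exact: finite_finset.
  by move=> S _; exact: mE.
rewrite probability_setC // QBad -EFinB lee_fin.
by rewrite lerBrDr addrC -lerBrDr.
Qed.
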